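(* There is a constant $C_t>0$, independent of $h$, such that for all $\phi\in E_h(\Omega)$, all $T\in\mathcal T_h$ and every edge $e$ of $T$ (with $\nabla\phi$ taken as the gradient of $\phi|_T$), $$\|\beta\nabla\phi\cdot\mathbf n_e\|_{L^2(e)}^2\le C_t\,h^{-1}\,\|\beta\nabla\phi\|_{L^2(T)}^2.$$
   Context: Let $\Omega\subset\mathbb R^2$ be a convex polygonal domain, $\Omega=\Omega_1\cup\Gamma\cup\Omega_2$ with $\Omega_1,\Omega_2$ (also written $\Omega^-,\Omega^+$) disjoint open subdomains separated by a $C^2$ interface curve $\Gamma$. The coefficient $\beta$ satisfies $\beta|_{\Omega_i}\in C^1(\Omega_i)$ and $0<\underline\beta<\beta<\overline\beta$. Mesh: $\mathcal T_h$ is a regular triangulation of $\Omega$ of mesh size $h$, not necessarily aligned with $\Gamma$; triangles cut by $\Gamma$ are interface elements. Each edge $e$ carries a fixed unit normal $\mathbf n_e$. IFEM space: on a non-interface triangle $S_h(T)=\mathcal P^1(T)$. An interface triangle $T$ with vertices $A_1,A_2,A_3$ is divided by the interface (represented in $T$ by the segment joining the two points where $\Gamma$ crosses $\partial T$) into $T^+\subset\Omega^+$, $T^-\subset\Omega^-$, and $\widehat S_h(T)=\mathrm{span}\{\hat\lambda_1,\hat\lambda_2,\hat\lambda_3\}$, where $\hat\lambda_j$ is the unique function linear on each of $T^\pm$ with $\hat\lambda_j(A_i)=\delta_{ij}$ that is continuous and has continuous $\beta\nabla\hat\lambda_j\cdot\mathbf n_\Gamma$ across the interface ($\mathbf n_\Gamma$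 the unit normal to the interface). $\widehat S_h(\Omega)$ consists of the functions $\phi$ with $\phi|_T\in S_h(T)$ (non-interface $T$) or $\phi|_T\in\widehat S_h(T)$ (interface $T$), single-valued at mesh vertices and vanishing at vertices on $\partial\Omega$. $C_h(\Omega)$ is the space of piecewise constants on $\mathcal T_h$, and $E_h(\Omega)=\widehat S_h(\Omega)+C_h(\Omega)$. *)

(* Defs.v *)
From HB Require Import structures.
From mathcomp Require Import all_boot all_order all_algebra.
From mathcomp Require Import all_classical all_reals all_analysis.
Set Implicit Arguments. Unset Strict Implicit. Unset Printing Implicit Defensive.
Import Order.TTheory GRing.Theory Num.Theory numFieldNormedType.Exports.
Local Open Scope classical_set_scope.
Local Open Scope ring_scope.

Section IFE.
Variable R : realType.

Definition pt := (R * R)%type.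
Definition padd (p q : pt) : pt := (p.1 + q.1, p.2 + q.2).
Definition psub (p q : pt) : pt := (p.1 - q.1, p.2 - q.2).
Definition pscale (t : R) (p : pt) : pt := (t * p.1, t * p.2).
Definition dot (p q : pt) : R := p.1 * q.1 + p.2 * q.2.
Definition det2 (p q : pt) : R := p.1 * q.2 - p.2 * q.1.
Definition dist (p q : pt) : R := Num.sqrt (dot (psub p q) (psub p q)).
Definition rot90 (p : pt) : pt := (- p.2, p.1).

Definition segpar (A B : pt) (t : R) : pt := padd A (pscale t (psub B A)).
Definition seg (A B : pt) : set pt := [set segpar A B t | t in `[0, 1]].
Definition unit_normal (A B : pt) : pt := pscale (dist A B)^-1 (rot90 (psub B A)).

Definition conv_hull (P : seq pt) : set pt :=
  [set x | exists w : nat -> R, (forall i, 0 <= w i) /\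
     \sum_(i < size P) w i = 1 /\
     x = (\sum_(i < size P) w i * (nth (0,0) P i).1,
          \sum_(i < size P) w i * (nth (0,0) P i).2)].

Definition convex_polygonal_domain (Omega : set pt) : Prop :=
  exists P : seq pt, Omega = interior (conv_hull P) /\ Omega !=set0.

Definition tri := (pt * pt * pt)%type.
Definition v1 (T : tri) := T.1.1.
Definition v2 (T : tri) := T.1.2.
Definition v3 (T : tri) := T.2.
Definition is_vertex (T : tri) (v : pt) := v = v1 T \/ v = v2 T \/ v = v3 T.
Definition nondegenerate (T : tri) := det2 (psub (v2 T) (v1 T)) (psub (v3 T) (v1 T)) != 0.

Definition tri_point (T : tri) (s t : R) : pt :=
  padd (v1 T) (padd (pscale s (psub (v2 T) (v1 T))) (pscale t (psub (v3 T) (v1 T)))).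
Definition tri_set (T : tri) : set pt :=
  [set x | exists s t, 0 <= s /\ 0 <= t /\ s + t <= 1 /\ x = tri_point T s t].
Definition tri_int (T : tri) : set pt :=
  [set x | exists s t, 0 < s /\ 0 < t /\ s + t < 1 /\ x = tri_point T s t].
Definition tri_boundary (T : tri) : set pt :=
  seg (v1 T) (v2 T) `|` seg (v2 T) (v3 T) `|` seg (v3 T) (v1 T).
Definition is_edge (T : tri) (e : pt * pt) : Prop :=
  e = (v1 T, v2 T) \/ e = (v2 T, v3 T) \/ e = (v3 T, v1 T).

Definition area (T : tri) : R :=
  `|det2 (psub (v2 T) (v1 T)) (psub (v3 T) (v1 T))| / 2.
Definition perimeter (T : tri) : R :=
  dist (v1 T) (v2 T) + dist (v2 T) (v3 T) + dist (v3 T) (v1 T).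
Definition diam (T : tri) : R :=
  Num.max (dist (v1 T) (v2 T)) (Num.max (dist (v2 T) (v3 T)) (dist (v3 T) (v1 T))).
Definition inradius (T : tri) : R := 2 * area T / perimeter T.

Definition triangulation (Omega : set pt) (Th : seq tri) : Prop :=
  (forall T, T \in Th -> nondegenerate T) /\
  \bigcup_(T in [set T | T \in Th]) tri_set T = closure Omega /\
  (forall i j, (i < size Th)%N -> (j < size Th)%N -> i <> j ->
     let T0 : tri := ((0,0),(0,0),(0,0)) in
     let T := nth T0 Th i in let T' := nth T0 Th j in
     tri_int T `&` tri_int T' = set0 /\
     (tri_set T `&` tri_set T' = set0 \/
      (exists v, is_vertex T v /\ is_vertex T' v /\ tri_set T `&` tri_set T' = [set v]) \/
      (exists v w, v <> w /\ is_vertex T v /\ is_vertex T' v /\ is_vertex T w /\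
                   is_vertex T' w /\ tri_set T `&` tri_set T' = seg v w))).

Definition mesh_size (Th : seq tri) : R := \big[Num.max/0]_(T <- Th) diam T.

Definition shape_regular (I : Type) (Th : I -> seq tri) : Prop :=
  exists sigma : R, 0 < sigma /\
    forall i T, T \in Th i -> diam T <= sigma * inradius T.
Definition quasi_uniform (I : Type) (Th : I -> seq tri) : Prop :=
  exists tau : R, 0 < tau /\
    forall i T, T \in Th i -> mesh_size (Th i) <= tau * diam T.

Definition C2_fun (f : R -> R) : Prop :=
  (forall t, derivable f t 1) /\ (forall t, derivable (derive1 f) t 1) /\
  continuous (derive1 (derive1 f)).

(* Gamma is (the part in Omega of) a regular C^2 curve, simple except
   possibly for closing up: gamma(t) = (g1 t, g2 t), t in [a,b] *)
Definition C2_curve_in (Omega Gamma : set pt) : Prop :=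
  exists (a b : R) (g1 g2 : R -> R), a < b /\ C2_fun g1 /\ C2_fun g2 /\
    (forall t, (derive1 g1 t) ^+ 2 + (derive1 g2 t) ^+ 2 != 0) /\
    {in `[a, b[ &, injective (fun t => (g1 t, g2 t) : pt)} /\
    Gamma = Omega `&` [set ((g1 t, g2 t) : pt) | t in `[a, b]].

(* Omega = Omega1 u Gamma u Omega2, with Omega1 (= Omega^-), Omega2 (= Omega^+)
   disjoint subdomains separated by the C^2 interface Gamma *)
Definition interface_split (Omega Omega1 Omega2 Gamma : set pt) : Prop :=
  open Omega1 /\ open Omega2 /\ Omega1 !=set0 /\ Omega2 !=set0 /\
  connected Omega1 /\ connected Omega2 /\
  Omega1 `&` Omega2 = set0 /\ Gamma `&` Omega1 = set0 /\ Gamma `&` Omega2 = set0 /\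
  Omega = Omega1 `|` Gamma `|` Omega2 /\
  C2_curve_in Omega Gamma.

Definition C1_on (U : set pt) (f : pt -> R) : Prop :=
  (forall x, U x -> derivable f x ((1, 0) : pt) /\ derivable f x ((0, 1) : pt)) /\
  {in U, continuous ('D_((1, 0) : pt) f)} /\ {in U, continuous ('D_((0, 1) : pt) f)}.

Definition is_interface (Gamma : set pt) (T : tri) : Prop :=
  exists x, Gamma x /\ tri_int T x.

Definition affine := (R * pt)%type.
Definition aeval (f : affine) (x : pt) : R := f.1 + dot f.2 x.

(* side of the line through D, E: T^+ = {side >= 0}, T^- = {side < 0} *)
Definition side (D E x : pt) : R := det2 (psub E D) (psub x D).

(* fP (on T^+) and fM (on T^-) are the pieces of the IFE function of the
   interface triangle T, cut by the segment [D,E], with nodal values u: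
   nodal interpolation, continuity across the cut line (equality at D and E),
   and continuity of the flux bP grad fP . n = bM grad fM . n. *)
Definition local_ife (bP bM : R) (D E : pt) (T : tri) (u : pt -> R) (fP fM : affine) : Prop :=
  (forall v, is_vertex T v ->
     (0 <= side D E v -> aeval fP v = u v) /\ (side D E v < 0 -> aeval fM v = u v)) /\
  aeval fP D = aeval fM D /\ aeval fP E = aeval fM E /\
  bP * dot fP.2 (unit_normal D E) = bM * dot fM.2 (unit_normal D E).

Definition local_lin (T : tri) (u : pt -> R) (f : affine) : Prop :=
  forall v, is_vertex T v -> aeval f v = u v.

(* phi in E_h(Omega) = hat S_h(Omega) + C_h(Omega), represented elementwise by
   its two affine pieces pP T (on T^+) and pM T (on T^-); on non-interface
   elements pP T = pM T.  The data (cutD T, cutE T) are the points where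
   Gamma crosses dT, and (bP T, bM T) the values beta^+, beta^- used in the
   flux condition on T. *)
Definition in_Eh (Omega Gamma : set pt) (Th : seq tri) (cutD cutE : tri -> pt)
    (bP bM : tri -> R) (pP pM : tri -> affine) : Prop :=
  exists (u : pt -> R) (c : tri -> R) (qP qM : tri -> affine),
    (forall T v, T \in Th -> is_vertex T v -> ~ Omega v -> u v = 0) /\
    forall T, T \in Th ->
      pP T = ((qP T).1 + c T, (qP T).2) /\ pM T = ((qM T).1 + c T, (qM T).2) /\
      (is_interface Gamma T ->
         local_ife (bP T) (bM T) (cutD T) (cutE T) T u (qP T) (qM T)) /\
      (~ is_interface Gamma T -> qP T = qM T /\ local_lin T u (qP T)).

Definition grad_phi (Gamma : set pt) (cutD cutE : tri -> pt) (pP pM : tri -> affine)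
    (T : tri) (x : pt) : pt :=
  if `[< is_interface Gamma T >] then
    (if 0 <= side (cutD T) (cutE T) x then (pP T).2 else (pM T).2)
  else (pP T).2.

Definition edge_flux_sq (beta : pt -> R) (g : pt -> pt) (A B : pt) : \bar R :=
  ((dist A B)%:E *
   \int[@lebesgue_measure R]_(t in `[0%R, 1%R])
      ((beta (segpar A B t) * dot (g (segpar A B t)) (unit_normal A B)) ^+ 2)%:E)%E.

Definition tri_energy (beta : pt -> R) (g : pt -> pt) (T : tri) : \bar R :=
  (\int[(@lebesgue_measure R \x @lebesgue_measure R)%E]_(x in tri_set T)
      ((beta x) ^+ 2 * dot (g x) (g x))%:E)%E.

End IFE.

(* Main.v *)
Require Import Defs.
From HB Require Import structures.
From mathcomp Require Import all_boot all_order all_algebra.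
From mathcomp Require Import all_classical all_reals all_analysis.
From mathcomp Require Import ring lra.
Import Order.TTheory GRing.Theory Num.Theory numFieldNormedType.Exports.
Local Open Scope classical_set_scope.
Local Open Scope ring_scope.

Lemma abs_le_sqrt (R : realType) (a b : R) : `|a| <= Num.sqrt (a*a + b*b).
Proof.
rewrite -sqrtr_sqr; apply: ler_wsqrtr; rewrite expr2 lerDl; exact: mulr_ge0_le0 || nra.
Qed.

Lemma dist_c1 (R : realType) (p q : pt R) : `|p.1 - q.1| <= dist p q.
Proof. exact: abs_le_sqrt. Qed.

Lemma dist_c2 (R : realType) (p q : pt R) : `|p.2 - q.2| <= dist p q.
Proof. rewrite /dist /dot /psub /= [X in Num.sqrt X]addrC; exact: abs_le_sqrt. Qed.

Lemma dist_ge0 (R : realType) (p q : pt R) : 0 <= dist p q.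
Proof. exact: sqrtr_ge0. Qed.

Lemma dist_sq (R : realType) (p q : pt R) : dist p q ^+ 2 = dot (psub p q) (psub p q).
Proof. rewrite sqr_sqrtr // /dot; nra. Qed.

Lemma lagrange (R : realType) (g w : pt R) :
  dot g w ^+ 2 + dot g (rot90 w) ^+ 2 = dot g g * dot w w.
Proof. rewrite /dot /rot90 /=; ring. Qed.

Lemma unit_normal_sq (R : realType) (g : pt R) (A B : pt R) :
  dot g (unit_normal A B) ^+ 2 <= dot g g.
Proof.
rewrite /unit_normal.
set w := psub B A.
have -> : dot g (pscale (dist A B)^-1 (rot90 w)) = (dist A B)^-1 * dot g (rot90 w).
  rewrite /dot /pscale /=; ring.
have dw : dist A B ^+ 2 = dot w w.
  by rewrite dist_sq /w /dot /psub /=; ring.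
have gg : 0 <= dot g g by rewrite /dot; nra.
have [d0|dn0] := eqVneq (dist A B) 0.
  by rewrite d0 invr0 mul0r expr0n.
rewrite exprMn exprVn dw.
have ww : 0 < dot w w by rewrite -dw exprn_gt0 // lt0r dn0 dist_ge0.
rewrite mulrC ler_pdivrMr //.
have := @lagrange R g w; rewrite mulrC; nra.
Qed.

Lemma dist_eq0 (R : realType) (p q : pt R) : dist p q = 0 -> p = q.
Proof.
move=> /eqP; rewrite sqrtr_eq0 /dot /psub /= => h.
have s1 := sqr_ge0 (p.1 - q.1); have s2 := sqr_ge0 (p.2 - q.2).
rewrite !expr2 in s1 s2.
have h1 : p.1 - q.1 = 0 by apply/eqP; rewrite -sqrf_eq0 eq_le sqr_ge0 andbT expr2; lra.
have h2 : p.2 - q.2 = 0 by apply/eqP; rewrite -sqrf_eq0 eq_le sqr_ge0 andbT expr2; lra.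
move: p q h1 h2 {h s1 s2} => [p1 p2] [q1 q2] /= /eqP; rewrite subr_eq0 => /eqP -> /eqP.
by rewrite subr_eq0 => /eqP ->.
Qed.

Lemma grad_rel (R : realType) (gP gM D E : pt R) (bP bM bmin bmax : R) :
  D <> E -> dot gP (psub E D) = dot gM (psub E D) ->
  bP * dot gP (unit_normal D E) = bM * dot gM (unit_normal D E) ->
  0 < bmin -> bmin < bP -> bmin < bM -> bM < bmax ->
  dot gP gP <= (1 + (bmax / bmin) ^+ 2) * dot gM gM.
Proof.
move=> DE hc hf b0 bP1 bM1 bM2.
set w := psub E D.
have dn0 : dist D E != 0.
  by apply/eqP => /dist_eq0.
have dw : dist D E ^+ 2 = dot w w.
  by rewrite dist_sq /w /dot /psub /=; ring.
have ww : 0 < dot w w by rewrite -dw exprn_gt0 // lt0r dn0 dist_ge0.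
have nE g : dot g (unit_normal D E) = (dist D E)^-1 * dot g (rot90 w).
  rewrite /unit_normal /dot /pscale /=; ring.
rewrite !nE in hf.
set a := dot gP (rot90 w) in hf *; set b := dot gM (rot90 w) in hf *.
have hab : bP * a = bM * b.
  have := congr1 (fun z => z * dist D E) hf.
  by rewrite -!mulrA ![_^-1 * _]mulrC -!mulrA divff // !mulr1.
set K := (bmax / bmin) ^+ 2.
have hK : a ^+ 2 <= K * b ^+ 2.
  have e1 : a ^+ 2 * bP ^+ 2 = bM ^+ 2 * b ^+ 2 by rewrite -!exprMn mulrC hab.
  have e2 : bM ^+ 2 * b ^+ 2 <= bmax ^+ 2 * b ^+ 2.
    apply: ler_wpM2r; first exact: sqr_ge0.
    have bM0 : 0 < bM by exact: lt_trans bM1.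
    rewrite ler_sqr ?nnegrE; [exact: ltW|exact: ltW|]; apply: ltW; exact: lt_trans bM2.
  have e3 : a ^+ 2 * bmin ^+ 2 <= a ^+ 2 * bP ^+ 2.
    apply: ler_wpM2l; first exact: sqr_ge0.
    have bP0 : 0 < bP by exact: lt_trans bP1.
    by rewrite ler_sqr ?nnegrE; apply: ltW.
  rewrite /K expr_div_n mulrAC ler_pdivlMr; last exact: exprn_gt0.
  rewrite e1 in e3; exact: le_trans e3 e2.
have L1 := @lagrange R gP w; have L2 := @lagrange R gM w.
rewrite -/a -/b hc in L1; rewrite -/b in L2.
have K0 : 0 <= K by exact: sqr_ge0.
rewrite -(ler_pM2r ww) -mulrA -L2 -L1.
have c0 : 0 <= dot gM w ^+ 2 by exact: sqr_ge0.
have b0' : 0 <= b ^+ 2 by exact: sqr_ge0.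
nra.
Qed.

Lemma diam_pos (R : realType) (T : tri R) : Defs.nondegenerate T -> 0 < diam T.
Proof.
move=> nd.
have d12 : 0 < dist (v1 T) (v2 T).
  rewrite lt0r dist_ge0 andbT; apply/eqP => /dist_eq0 e.
  by move: nd; rewrite /Defs.nondegenerate e /det2 /psub /= !subrr !mul0r subrr eqxx.
by rewrite /diam; apply: lt_le_trans d12 _; rewrite le_max lexx.
Qed.

Lemma H1 (R : realType) (u v b c r d : R) :
  `|u| <= r -> `|v| <= r -> `|b| <= d -> `|c| <= d -> `|u * b - v * c| <= 2 * r * d.
Proof.
move=> hu hv hb hc.
have r0 : 0 <= r by exact: le_trans (normr_ge0 _) hu.
apply: le_trans (ler_normB _ _) _; rewrite !normrM.
have e1 : `|u| * `|b| <= r * d by apply: ler_pM => //.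
have e2 : `|v| * `|c| <= r * d by apply: ler_pM => //.
lra.
Qed.

Lemma H2 (R : realType) (X Dt : R) : Dt != 0 -> `|X| <= `|Dt| / 3 ->
  0 <= 1/3 + X / Dt /\ 0 <= 1/3 - X / Dt.
Proof.
move=> D0 hX.
have : `|X / Dt| <= 1/3.
  rewrite normrM normfV ler_pdivrMr ?normr_gt0 //.
  lra.
rewrite ler_norml => /andP [h1 h2]; split; lra.
Qed.

Lemma square_in_tri (R : realType) (T : tri R) (sigma : R) :
  Defs.nondegenerate T -> 0 < sigma -> diam T <= sigma * inradius T ->
  exists c1 c2 r, diam T / (3 * sigma) <= 2 * r /\
    (forall x : pt R, `|x.1 - c1| <= r -> `|x.2 - c2| <= r -> tri_set T x).
Proof.
move=> nd s0 hs; have d0 := @diam_pos R T nd.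
have h12 : dist (v1 T) (v2 T) <= diam T by rewrite /diam le_max lexx.
have h23 : dist (v2 T) (v3 T) <= diam T by rewrite /diam !le_max lexx orbT.
have h31 : dist (v3 T) (v1 T) <= diam T by rewrite /diam !le_max lexx !orbT.
have hper : diam T <= perimeter T.
  rewrite /perimeter /diam !ge_max.
  have := @dist_ge0 R (v1 T) (v2 T); have := @dist_ge0 R (v2 T) (v3 T);
  have := @dist_ge0 R (v3 T) (v1 T) => g1 g2 g3.
  apply/andP; split; [|apply/andP; split]; lra.
move: hs; rewrite /inradius /area.
move: nd d0 h12 h23 h31 hper.
case: T => [[[p1 p2] [q1 q2]] [r1 r2]]; rewrite /Defs.nondegenerate /v1 /v2 /v3 /=.
set d := diam _; set per := perimeter _.
set Dt := det2 _ _ => nd d0 h12 h23 h31 hper hs.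
have per0 : 0 < per by exact: lt_le_trans hper.
have hdd : d * d <= sigma * `|Dt|.
  have : d * per <= sigma * `|Dt|.
    move: hs; have -> : 2 * (`|Dt| / 2) / per = `|Dt| / per by field; lra.
    by rewrite mulrA ler_pdivlMr.
  have : d * d <= d * per by rewrite ler_pM2l.
  lra.
have Dpos : 0 < `|Dt| by rewrite normr_gt0.
set r := `|Dt| / (6 * d).
have r2d : 2 * r * d = `|Dt| / 3 by rewrite /r; field; lra.
exists (p1 + ((q1 - p1) + (r1 - p1)) / 3), (p2 + ((q2 - p2) + (r2 - p2)) / 3), r.
split.
  have -> : 2 * r = `|Dt| / (3 * d) by rewrite /r; field; lra.
  rewrite -subr_ge0.
  have -> : `|Dt| / (3 * d) - d / (3 * sigma) = (sigma * `|Dt| - d * d) / (3 * sigma * d).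
    by field; lra.
  apply: divr_ge0; first lra.
  by apply: mulr_ge0; [apply: mulr_ge0|]; lra.
move=> [x1 x2] /= hx1 hx2.
set y1 := x1 - _ in hx1; set y2 := x2 - _ in hx2.
have ea1 : `|q1 - p1| <= d.
  rewrite distrC; apply: le_trans (@dist_c1 R (p1, p2) (q1, q2)) h12.
have ea2 : `|q2 - p2| <= d by rewrite distrC; apply: le_trans (@dist_c2 R (p1, p2) (q1, q2)) h12.
have eb1 : `|r1 - p1| <= d by apply: le_trans (@dist_c1 R (r1, r2) (p1, p2)) h31.
have eb2 : `|r2 - p2| <= d by apply: le_trans (@dist_c2 R (r1, r2) (p1, p2)) h31.
have ec1 : `|(r1 - p1) - (q1 - p1)| <= d.
  have -> : (r1 - p1) - (q1 - p1) = r1 - q1 by ring.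
  by rewrite distrC; apply: le_trans (@dist_c1 R (q1, q2) (r1, r2)) h23.
have ec2 : `|(r2 - p2) - (q2 - p2)| <= d.
  have -> : (r2 - p2) - (q2 - p2) = r2 - q2 by ring.
  by rewrite distrC; apply: le_trans (@dist_c2 R (q1, q2) (r1, r2)) h23.
have eDt : Dt = (q1 - p1) * (r2 - p2) - (q2 - p2) * (r1 - p1) by [].
set X1 := y1 * (r2 - p2) - y2 * (r1 - p1).
set X2 := y2 * (q1 - p1) - y1 * (q2 - p2).
set X3 := y1 * ((r2 - p2) - (q2 - p2)) - y2 * ((r1 - p1) - (q1 - p1)).
have [s0' _] := @H2 R X1 Dt nd (ltac:(rewrite -r2d; exact: H1)).
have [t0' _] := @H2 R X2 Dt nd (ltac:(rewrite -r2d; exact: H1)).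
have [_ u0'] := @H2 R X3 Dt nd (ltac:(rewrite -r2d; exact: H1)).
exists (1/3 + X1 / Dt), (1/3 + X2 / Dt); split => //; split => //; split.
  have e3 : X3 / Dt = X1 / Dt + X2 / Dt by rewrite /X1 /X2 /X3; ring.
  lra.
rewrite /tri_point /padd /pscale /psub /= /X1 /X2 /y1 /y2.
move: nd; rewrite eDt => nd.
congr (_, _); field => //.
Qed.

Local Open Scope ereal_scope.
Lemma int_mono d (T : measurableType d) (R : realType) (mu : {measure set T -> \bar R})
  (D1 D2 : set T) (f g : T -> \bar R) :
  (forall x, 0 <= f x) -> (forall x, 0 <= g x) ->
  (forall x, (f \_ D1) x <= (g \_ D2) x) ->
  \int[mu]_(x in D1) f x <= \int[mu]_(x in D2) g x.
Proof.
move=> f0 g0 fg.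
rewrite (ge0_integralE mu (fun x _ => f0 x)) (ge0_integralE mu (fun x _ => g0 x)).
apply: ge_ereal_sup => _ [h hle <-]; apply: ereal_sup_ubound; exists h => //.
by move=> x; apply: le_trans (hle x) (fg x).
Qed.

Lemma int_lb d (T : measurableType d) (R : realType) (mu : {measure set T -> \bar R})
  (Q D : set T) (F : T -> \bar R) (c : R) :
  measurable Q -> Q `<=` D -> (0 <= c)%R -> (forall x, 0 <= F x) ->
  (forall x, D x -> c%:E <= F x) ->
  c%:E * mu Q <= \int[mu]_(x in D) F x.
Proof.
move=> mQ QD c0 F0 Fc.
rewrite -integral_cst //; apply: int_mono => //.
move=> x; rewrite /patch; case: ifPn => xQ.
  have Dx : D x by apply: QD; move: xQ; rewrite inE.
  by rewrite ifT ?inE //= Fc.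
by case: ifPn.
Qed.

Lemma int_ub (R : realType) (F : R -> \bar R) (M : R) :
  (forall x, 0 <= F x) -> (forall x, x \in `[0%R, 1%R] -> F x <= M%:E) ->
  \int[@lebesgue_measure R]_(x in `[0%R, 1%R]) F x <= M%:E.
Proof.
move=> F0 FM.
have M0 : (0 <= M)%R by rewrite -lee_fin; apply: le_trans (F0 0%R) (FM 0%R _); rewrite in_itv /= lexx ler01.
have -> : M%:E = \int[@lebesgue_measure R]_(x in `[0%R, 1%R]) (cst M%:E x).
  rewrite integral_cst //= lebesgue_measure_itv /= lte_fin ltr01 /=.
  by rewrite -EFinB subr0 -EFinM mulr1.
apply: int_mono => // x.
rewrite /patch; case: ifPn => // xI; apply: FM; move: xI; rewrite inE /=; exact.
Qed.

Lemma measQ (R : realType) (a b c e : R) :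
  ((@lebesgue_measure R) \x (@lebesgue_measure R)) (`[a, b] `*` `[c, e]) =
  (@lebesgue_measure R `[a, b]) * (@lebesgue_measure R `[c, e]).
Proof. by rewrite product_measure1E. Qed.
Local Close Scope ereal_scope.

Lemma segpar_in_tri (R : realType) (T : tri R) (A B : pt R) (t : R) :
  is_edge T (A, B) -> t \in `[0, 1] -> tri_set T (segpar A B t).
Proof.
rewrite in_itv /= => hE /andP [t0 t1].
case: T hE => [[[p1 p2] [q1 q2]] [r1 r2]].
rewrite /is_edge /v1 /v2 /v3 /= => -[[-> ->]|[[-> ->]|[-> ->]]].
- exists t, 0; split; [lra|split; [lra|split; [lra|]]].
  by rewrite /segpar /tri_point /padd /pscale /psub /=; congr (_, _); ring.
- exists (1 - t), t; split; [lra|split; [lra|split; [lra|]]].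
  by rewrite /segpar /tri_point /padd /pscale /psub /=; congr (_, _); ring.
- exists 0, (1 - t); split; [lra|split; [lra|split; [lra|]]].
  by rewrite /segpar /tri_point /padd /pscale /psub /=; congr (_, _); ring.
Qed.

Lemma edge_le_diam (R : realType) (T : tri R) (A B : pt R) :
  is_edge T (A, B) -> dist A B <= diam T.
Proof.
rewrite /diam => -[[-> ->]|[[-> ->]|[-> ->]]]; by rewrite !le_max lexx ?orbT.
Qed.

Theorem mainTheorem8 (R : realType)
    (Omega Omega1 Omega2 Gamma : set (pt R)) (beta : pt R -> R) (bmin bmax : R)
    (I : Type) (Th : I -> seq (tri R))
    (cutD cutE : tri R -> pt R) (bP bM : tri R -> R) :
  convex_polygonal_domain Omega ->
  interface_split Omega Omega1 Omega2 Gamma ->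
  C1_on Omega1 beta -> C1_on Omega2 beta ->
  0 < bmin -> (forall x, closure Omega x -> bmin < beta x < bmax) ->
  (forall i, triangulation Omega (Th i)) ->
  shape_regular Th -> quasi_uniform Th ->
  (forall i T, T \in Th i -> is_interface Gamma T ->
     cutD T <> cutE T /\ Gamma `&` tri_boundary T = [set cutD T; cutE T]) ->
  (forall T, (exists x, closure Omega x /\ bP T = beta x) /\
             (exists x, closure Omega x /\ bM T = beta x)) ->
  exists Ct : R, 0 < Ct /\
    forall i (pP pM : tri R -> affine R),
      in_Eh Omega Gamma (Th i) cutD cutE bP bM pP pM ->
      forall T, T \in Th i -> forall A B, is_edge T (A, B) ->
        (edge_flux_sq beta (grad_phi Gamma cutD cutE pP pM T) A B
         <= (Ct / mesh_size (Th i))%:E * tri_energy beta (grad_phi Gamma cutD cutE pP pM T) T)%E.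
Proof.
move=> hO hsplit _ _ hb0 hbeta htri [sig [sig0 hsig]] [tau [tau0 htau]] hcut hbPM.
set K := 1 + (bmax / bmin) ^+ 2.
have K0 : 0 <= (bmax / bmin) ^+ 2 := sqr_ge0 _.
have K1 : 0 < 1 + K by rewrite /K; lra.
have KK : 1 <= K by rewrite /K; lra.
have bx0 : 0 < bmax ^+ 2 + 1 by have := sqr_ge0 bmax; lra.
have sg2 : 0 < 9 * sig ^+ 2 by apply: mulr_gt0 => //; exact: exprn_gt0.
have bm2 : 0 < bmin ^+ 2 by exact: exprn_gt0.
exists ((bmax ^+ 2 + 1) * (1 + K) * tau * (9 * sig ^+ 2) / bmin ^+ 2).
split.
  by apply: divr_gt0 => //; repeat apply: mulr_gt0.
move=> i pP pM [u [c [qP [qM [_ hT]]]]] T Ti A B hAB.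
have [hnd [hcov _]] := htri i.
have ndT := hnd T Ti.
have inO : forall x, tri_set T x -> bmin < beta x < bmax.
  by move=> x hx; apply: hbeta; rewrite -hcov; exists T.
set g := grad_phi Gamma cutD cutE pP pM T.
have gg0 : forall z : pt R, 0 <= dot z z.
  by move=> z; rewrite /dot; have := sqr_ge0 z.1; have := sqr_ge0 z.2; rewrite !expr2; lra.
have [S [S0 hS]] : exists S, 0 <= S /\ forall x, S / (1 + K) <= dot (g x) (g x) <= S.
  have [eP [eM [hI hN]]] := hT T Ti.
  case: (pselect (is_interface Gamma T)) => HI.
  - have [DE _] := hcut i T Ti HI.
    have [[xP [cxP ebP]] [xM [cxM ebM]]] := hbPM T.
    have /andP [bP1 bP2] := hbeta _ cxP; rewrite -ebP in bP1 bP2.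
    have /andP [bM1 bM2] := hbeta _ cxM; rewrite -ebM in bM1 bM2.
    have [_ [hD [hE hfl]]] := hI HI.
    set gP := (qP T).2 in hfl *; set gM := (qM T).2 in hfl *.
    have hc : dot gP (psub (cutE T) (cutD T)) = dot gM (psub (cutE T) (cutD T)).
      by move: hD hE; rewrite /aeval /dot /psub /gP /gM /=; lra.
    have r1 : dot gP gP <= K * dot gM gM by exact: grad_rel DE hc hfl hb0 bP1 bM1 bM2.
    have r2 : dot gM gM <= K * dot gP gP.
      exact: grad_rel DE (esym hc) (esym hfl) hb0 bM1 bP1 bP2.
    have g1 := gg0 gP; have g2 := gg0 gM.
    exists (dot gP gP + dot gM gM); split; first lra.
    move=> x; rewrite /g /grad_phi asboolT // eP eM /=.
    case: ifP => _ /=; (apply/andP; split; [rewrite ler_pdivrMr //|]); nra.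
  - exists (dot (pP T).2 (pP T).2); split => // x; rewrite /g /grad_phi asboolF //.
    apply/andP; split => //; rewrite ler_pdivrMr //.
    have := gg0 (pP T).2; nra.
have hedge : (edge_flux_sq beta g A B <= (dist A B * (bmax ^+ 2 * S))%:E)%E.
  rewrite /edge_flux_sq EFinM; apply: lee_wpmul2l; first by rewrite lee_fin dist_ge0.
  apply: int_ub; first by move=> t; rewrite lee_fin; exact: sqr_ge0.
  move=> t ht; rewrite lee_fin.
  have hp := @segpar_in_tri R T A B t hAB ht.
  have /andP [b1 b2] := inO _ hp.
  set p := segpar A B t in hp b1 b2 *.
  rewrite exprMn; apply: (@le_trans _ _ (bmax ^+ 2 * dot (g p) (g p))).
    apply: ler_pM; [exact: sqr_ge0|exact: sqr_ge0| |exact: unit_normal_sq].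
    have bp0 : 0 < beta p := lt_trans hb0 b1.
    by rewrite ler_sqr ?nnegrE; apply: ltW => //; exact: lt_trans b2.
  apply: ler_wpM2l; [exact: sqr_ge0|]; by have /andP [] := hS p.
have [c1 [c2 [r [hr hsq]]]] := @square_in_tri R T sig ndT sig0 (hsig i T Ti).
have d0 := @diam_pos R T ndT.
have r0 : 0 < r.
  have : 0 < diam T / (3 * sig) by apply: divr_gt0 => //; lra.
  lra.
set Q := [set` `[c1 - r, c1 + r]] `*` [set` `[c2 - r, c2 + r]].
have QT : Q `<=` tri_set T.
  move=> [x1 x2] [/= h1 h2]; apply: hsq; rewrite ler_distl /=.
    by move: h1; rewrite in_itv.
  by move: h2; rewrite in_itv.
have henergy : (((bmin ^+ 2 * (S / (1 + K))) * ((2 * r) * (2 * r)))%:E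
                 <= tri_energy beta g T)%E.
  rewrite /tri_energy EFinM.
  have -> : ((2 * r) * (2 * r))%:E = ((@lebesgue_measure R) \x (@lebesgue_measure R))%E Q.
    rewrite product_measure1E //.
    have L1 := @lebesgue_measure_itv R `[c1 - r, c1 + r].
    have L2 := @lebesgue_measure_itv R `[c2 - r, c2 + r].
    rewrite /= lte_fin in L1; rewrite /= lte_fin in L2.
    have e1 : c1 - r < c1 + r by lra.
    have e2 : c2 - r < c2 + r by lra.
    rewrite e1 in L1; rewrite e2 in L2.
    have -> : ((2 * r * (2 * r))%:E = ((c1 + r)%:E - (c1 - r)%:E) * ((c2 + r)%:E - (c2 - r)%:E))%E.
      by rewrite -!EFinB -EFinM; congr (_%:E); ring.
    by congr (_ * _)%E; [exact: (esym L1)|exact: (esym L2)].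
  apply: int_lb.
  - exact: measurableX.
  - exact: QT.
  - by apply: mulr_ge0; [exact: sqr_ge0|apply: divr_ge0 => //; exact: ltW].
  - by move=> x; rewrite lee_fin; apply: mulr_ge0; [exact: sqr_ge0|exact: gg0].
  - move=> x hx; rewrite lee_fin; have /andP [b1 b2] := inO _ hx.
    apply: ler_pM; [exact: sqr_ge0|apply: divr_ge0 => //; exact: ltW| |].
      have bx0' : 0 < beta x := lt_trans hb0 b1.
      by rewrite ler_sqr ?nnegrE; apply: ltW.
    by have /andP [] := hS x.
set h := mesh_size (Th i).
have hh1 : diam T <= h by rewrite /h /mesh_size; apply: le_bigmax_seq.
have hh2 : h <= tau * diam T := htau i T Ti.
have h0 : 0 < h by exact: lt_le_trans hh1.
have hAd := @edge_le_diam R T A B hAB.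
apply: le_trans hedge _.
have Ch0 : 0 <= (bmax ^+ 2 + 1) * (1 + K) * tau * (9 * sig ^+ 2) / bmin ^+ 2 / h.
  apply: divr_ge0; last exact: ltW.
  apply: divr_ge0; last exact: ltW.
  by repeat apply: mulr_ge0; apply: ltW.
have Ch0' : (0 <= ((bmax ^+ 2 + 1) * (1 + K) * tau * (9 * sig ^+ 2) / bmin ^+ 2 / h)%:E)%E.
  by rewrite lee_fin.
apply: le_trans (lee_wpmul2l Ch0' henergy).
rewrite -EFinM lee_fin.
set W := (2 * r) * (2 * r).
have -> : (bmax ^+ 2 + 1) * (1 + K) * tau * (9 * sig ^+ 2) / bmin ^+ 2 / h *
          (bmin ^+ 2 * (S / (1 + K)) * W) =
          ((bmax ^+ 2 + 1) * tau * S * ((9 * sig ^+ 2) * W)) / h.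
  by field; apply/and3P; split; apply/eqP; lra.
rewrite ler_pdivlMr //.
have hW : diam T * diam T <= (9 * sig ^+ 2) * W.
  have : diam T <= 2 * r * (3 * sig) by rewrite -ler_pdivrMr //; lra.
  have : 0 <= diam T by lra.
  rewrite /W; nra.
have e1 : dist A B * (bmax ^+ 2 * S) * h <= diam T * (bmax ^+ 2 * S) * (tau * diam T).
  apply: ler_pM; [|lra| |exact: hh2].
    by apply: mulr_ge0; [exact: dist_ge0|apply: mulr_ge0 => //; exact: sqr_ge0].
  by apply: ler_wpM2r => //; apply: mulr_ge0 => //; exact: sqr_ge0.
apply: le_trans e1 _.
have bS : 0 <= bmax ^+ 2 * S by apply: mulr_ge0 => //; exact: sqr_ge0.
have : bmax ^+ 2 * S * tau * (diam T * diam T) <= bmax ^+ 2 * S * tau * ((9 * sig ^+ 2) * W).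
  by apply: ler_wpM2l => //; apply: mulr_ge0 => //; lra.
have : 0 <= S * tau * ((9 * sig ^+ 2) * W).
  by repeat apply: mulr_ge0 => //; try lra; rewrite /W; nra.
nra.
Qed.
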